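(* Let $n$ be a positive integer and let $\alpha,\beta,\gamma,\delta: \mathcal{P}(n) \to [0,\infty)$ satisfy \[ \alpha(A)\beta(B) \leq \gamma(B \setminus A)\,\delta(A \setminus B) \quad \text{for all } A,B \in \mathcal{P}(n). \] Then \[ \Big(\sum_{A \in \mathcal{P}(n)}\alpha(A)\Big)\Big(\sum_{B \in \mathcal{P}(n)}\beta(B)\Big) \leq \Big(\sum_{C \in \mathcal{P}(n)}\gamma(C)\Big)\Big(\sum_{D \in \mathcal{P}(n)}\delta(D)\Big). \]
   Context: $[n]=\{1,\dots,n\}$ and $\mathcal{P}(n)$ denotes the power set of $[n]$. *)

(* Defs.v *)
From HB Require Import structures.
From mathcomp Require Import all_boot all_order all_algebra.

(* Main.v *)
Require Import Defs.
From HB Require Import structures.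
From mathcomp Require Import all_boot all_order all_algebra.
Import Order.TTheory GRing.Theory Num.Theory.
Local Open Scope ring_scope.

Lemma xy_le (R : realFieldType) (x y P Q : R) :
  0 <= x -> 0 <= y -> 0 <= Q -> x <= P -> y <= P -> x * y <= P * Q -> x + y <= P + Q.
Proof.
move=> x0 y0 Q0 xP yP xyPQ.
have P0 : 0 <= P by apply: le_trans xP.
case: (eqVneq P 0) => [P0e|Pn0].
  have -> : x = 0 by apply/eqP; rewrite eq_le x0 andbT -P0e.
  have -> : y = 0 by apply/eqP; rewrite eq_le y0 andbT -P0e.
  by rewrite add0r P0e add0r.
have Pp : 0 < P by rewrite lt_def Pn0.
rewrite -(ler_pM2l Pp).
have h1 : 0 <= (P - x) * (P - y) by apply: mulr_ge0; rewrite subr_ge0.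
have e : (P - x) * (P - y) = P * P + x * y - P * (x + y).
  rewrite mulrBl !mulrBr mulrDr opprB opprD.
  rewrite (mulrC x P) !addrA.
  by rewrite (addrAC (P*P)) [LHS]addrAC.
rewrite e subr_ge0 in h1.
apply: le_trans h1 _.
by rewrite mulrDr lerD2l.
Qed.

Lemma one_dim (R : realFieldType) (a0 a1 b0 b1 c0 c1 d0 d1 : R) :
  0 <= a0 -> 0 <= a1 -> 0 <= b0 -> 0 <= b1 -> 0 <= c0 -> 0 <= c1 -> 0 <= d0 -> 0 <= d1 ->
  a0 * b0 <= c0 * d0 -> a1 * b1 <= c0 * d0 -> a1 * b0 <= c0 * d1 -> a0 * b1 <= c1 * d0 ->
  (a0 + a1) * (b0 + b1) <= (c0 + c1) * (d0 + d1).
Proof.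
move=> ha0 ha1 hb0 hb1 hc0 hc1 hd0 hd1 h00 h11 h10 h01.
have key : a0 * b0 + a1 * b1 <= c0 * d0 + c1 * d1.
  apply: xy_le => //; try by apply: mulr_ge0.
  have -> : a0 * b0 * (a1 * b1) = (a1 * b0) * (a0 * b1).
    by rewrite mulrACA [RHS]mulrACA (mulrC a0).
  have -> : c0 * d0 * (c1 * d1) = (c0 * d1) * (c1 * d0).
    by rewrite mulrACA [RHS]mulrACA (mulrC d0).
  by apply: ler_pM => //; apply: mulr_ge0.
rewrite !mulrDl !mulrDr.
have -> : a0 * b0 + a0 * b1 + (a1 * b0 + a1 * b1) = (a0 * b0 + a1 * b1) + (a1 * b0 + a0 * b1).
  by rewrite [in LHS](addrC (a1*b0)) [LHS]addrACA [in LHS](addrC (a0*b1)).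
have -> : c0 * d0 + c0 * d1 + (c1 * d0 + c1 * d1) = (c0 * d0 + c1 * d1) + (c0 * d1 + c1 * d0).
  by rewrite [in LHS](addrC (c1*d0)) [LHS]addrACA.
by apply: lerD => //; apply: lerD.
Qed.


Lemma split_sum (R : realFieldType) (T : finType) (U : {set T}) (x : T) (f : {set T} -> R) :
  x \in U ->
  \sum_(A : {set T} | A \subset U) f A = \sum_(A : {set T} | A \subset U :\ x) (f A + f (x |: A)).
Proof.
move=> xU.
rewrite big_split /= (bigID (fun A : {set T} => x \in A)) /= addrC.
congr (_ + _).
  by apply: eq_bigl => A; rewrite subsetD1.
rewrite (reindex_onto (fun B : {set T} => x |: B) (fun A : {set T} => A :\ x)); last first.
  by move=> A /andP[_ xA]; rewrite setD1K.
apply: eq_bigl => B.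
case xB: (x \in B).
  rewrite subsetD1 xB andbF.
  apply/negbTE; apply/negP => /andP[_ /eqP e].
  by move: xB; rewrite -e !inE eqxx.
rewrite setU1K ?xB // eqxx andbT subsetD1 xB andbT setU11 andbT.
by rewrite subUset sub1set xU.
Qed.

Lemma gen (R : realFieldType) (T : finType) (k : nat) : forall (U : {set T}), #|U| = k ->
  forall (alpha beta gamma delta : {set T} -> R),
  (forall A, 0 <= alpha A) -> (forall A, 0 <= beta A) ->
  (forall A, 0 <= gamma A) -> (forall A, 0 <= delta A) ->
  (forall A B : {set T}, A \subset U -> B \subset U ->
     alpha A * beta B <= gamma (B :\: A) * delta (A :\: B)) ->
  (\sum_(A : {set T} | A \subset U) alpha A) * (\sum_(B : {set T} | B \subset U) beta B)
  <= (\sum_(C : {set T} | C \subset U) gamma C) * (\sum_(D : {set T} | D \subset U) delta D).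
Proof.
elim: k => [|k IH] U cU alpha beta gamma delta ha hb hc hd H.
  have U0 := cards0_eq cU; subst U.
  have e : forall f : {set T} -> R, \sum_(A : {set T} | A \subset set0) f A = f set0.
    by move=> f; apply: big_pred1 => A; rewrite /= subset0.
  rewrite !e.
  by have := H set0 set0 (sub0set _) (sub0set _); rewrite setDv.
have [x xU] : exists x, x \in U.
  by apply/set0Pn; rewrite -card_gt0 cU.
have cU' : #|U :\ x| = k.
  by move: cU; rewrite (cardsD1 x) xU add1n => -[].
have sp := split_sum R T U x ^~ xU; rewrite !sp.
apply: IH => //; try by move=> A; apply: addr_ge0.
move=> A B; rewrite !subsetD1 => /andP[AU xA] /andP[BU xB].
have e1 : (x |: B) :\: (x |: A) = B :\: A.
  apply/setP => y; rewrite !inE; case: eqP => // ->.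
  by rewrite ?(negbTE xA) ?(negbTE xB) /= ?andbF ?andbT.
have e2 : (x |: A) :\: (x |: B) = A :\: B.
  apply/setP => y; rewrite !inE; case: eqP => // ->.
  by rewrite ?(negbTE xA) ?(negbTE xB) /= ?andbF ?andbT.
have e3 : (x |: B) :\: A = x |: (B :\: A).
  apply/setP => y; rewrite !inE; case: eqP => // ->.
  by rewrite ?(negbTE xA) ?(negbTE xB) /= ?andbF ?andbT.
have e4 : (x |: A) :\: B = x |: (A :\: B).
  apply/setP => y; rewrite !inE; case: eqP => // ->.
  by rewrite ?(negbTE xA) ?(negbTE xB) /= ?andbF ?andbT.
have e5 : B :\: (x |: A) = B :\: A.
  apply/setP => y; rewrite !inE; case: eqP => // ->.
  by rewrite ?(negbTE xA) ?(negbTE xB) /= ?andbF ?andbT.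
have e6 : A :\: (x |: B) = A :\: B.
  apply/setP => y; rewrite !inE; case: eqP => // ->.
  by rewrite ?(negbTE xA) ?(negbTE xB) /= ?andbF ?andbT.
have sA : x |: A \subset U by rewrite subUset sub1set xU.
have sB : x |: B \subset U by rewrite subUset sub1set xU.
apply: one_dim => //.
- exact: H.
- by rewrite -e1 -e2; apply: H.
- by rewrite -e4 -e5; apply: H.
- by rewrite -e3 -e6; apply: H.
Qed.

Theorem lemma2p3 (R : realFieldType) (n : nat) (hn : (0 < n)%N)
  (alpha beta gamma delta : {set 'I_n} -> R)
  (ha : forall A, 0 <= alpha A) (hb : forall A, 0 <= beta A)
  (hc : forall A, 0 <= gamma A) (hd : forall A, 0 <= delta A)
  (H : forall A B : {set 'I_n}, alpha A * beta B <= gamma (B :\: A) * delta (A :\: B)) :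
  (\sum_(A : {set 'I_n}) alpha A) * (\sum_(B : {set 'I_n}) beta B)
  <= (\sum_(C : {set 'I_n}) gamma C) * (\sum_(D : {set 'I_n}) delta D).
Proof.
have e : forall f : {set 'I_n} -> R,
    \sum_(A : {set 'I_n}) f A = \sum_(A : {set 'I_n} | A \subset setT) f A.
  by move=> f; apply: eq_bigl => A; rewrite subsetT.
rewrite !e.
by apply: (@gen R _ _ setT (erefl _)) => // A B _ _; apply: H.
Qed.
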